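(* Let $(X,d)$ be a path-connected metric space, $n\geq 1$, and $\gamma:[0,1]\to X$ a path. The change-of-basepoint group isomorphism $\Gamma:\pi_n(X,\gamma(1))\to\pi_n(X,\gamma(0))$, $\Gamma([\beta])=[\gamma\ast\beta]$, is an isometry with respect to the pseudometrics $\rho$ on these groups.
   Context: Identify $n$-loops with based maps $(S^n,d_0)\to X$, $d_0=(1,0,\dots,0)$, with uniform metric $\mu(\alpha,\beta)=\sup_{t\in S^n}d(\alpha(t),\beta(t))$; for $a,b\in\pi_n(X,x)$, $\rho(a,b)=\inf\{\mu(\alpha,\beta)\mid\alpha\in a,\beta\in b\}$. Path-conjugation: fix once and for all a retraction $r:S^n\times[0,1]\to S^n\times\{0\}\cup\{d_0\}\times[0,1]$. For a path $\gamma$ and a based map $\alpha:(S^n,d_0)\to(X,\gamma(1))$, let $h:S^n\times\{0\}\cup\{d_0\}\times[0,1]\to X$ be $\alpha$ on $S^n\times\{0\}$ and $h(d_0,s)=\gamma(1-s)$; then $\gamma\ast\alpha:(S^n,d_0)\to(X,\gamma(0))$ is $t\mapsto h(r(t,1))$. *)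

(* Defs.v *)
From HB Require Import structures.
From mathcomp Require Import all_boot all_order all_algebra.
From mathcomp Require Import all_classical all_reals all_analysis.
Import Order.TTheory GRing.Theory Num.Theory.
Import numFieldNormedType.Exports.
Local Open Scope classical_set_scope.
Local Open Scope ring_scope.

(* Conventions: S^n is the unit sphere in R^(n+1) = 'rV[R]_(n.+1).
   Maps S^n -> X are represented by functions 'rV[R]_(n.+1) -> X; only
   their values on the sphere matter. *)

Definition sphere (R : realType) (n : nat) : set 'rV[R]_(n.+1) :=
  [set v | \sum_(i < n.+1) (v ord0 i) ^+ 2 = 1].

Definition d0 (R : realType) (n : nat) : 'rV[R]_(n.+1) :=
  \row_(i < n.+1) (i == ord0)%:R.

Definition unit_interval (R : realType) : set R := `[0, 1]%classic.

Definition is_metric (R : realType) (X : pseudoMetricType R)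
    (d : X -> X -> R) : Prop :=
  [/\ (forall x y, 0 <= d x y),
      (forall x y, d x y = 0 <-> x = y),
      (forall x y, d x y = d y x),
      (forall x y z, d x z <= d x y + d y z) &
      (forall x y (e : R), 0 < e -> (ball x e y <-> d x y < e))].

Definition is_path (R : realType) (X : topologicalType) (g : R -> X) : Prop :=
  {within unit_interval R, continuous g}.

Definition path_connected_sp (R : realType) (X : topologicalType) : Prop :=
  forall x y : X, exists g : R -> X, is_path R X g /\ g 0 = x /\ g 1 = y.

Definition based_map (R : realType) (X : topologicalType) (n : nat) (x : X)
    (a : 'rV[R]_(n.+1) -> X) : Prop :=
  {within sphere R n, continuous a} /\ a (d0 R n) = x.

Definition based_homotopic (R : realType) (X : topologicalType) (n : nat)
    (x : X) (a b : 'rV[R]_(n.+1) -> X) : Prop :=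
  exists H : 'rV[R]_(n.+1) * R -> X,
    [/\ {within sphere R n `*` unit_interval R, continuous H},
        (forall t, sphere R n t -> H (t, 0) = a t),
        (forall t, sphere R n t -> H (t, 1) = b t) &
        (forall s, unit_interval R s -> H (d0 R n, s) = x)].

Definition mu (R : realType) (X : Type) (d : X -> X -> R) (n : nat)
    (a b : 'rV[R]_(n.+1) -> X) : \bar R :=
  ereal_sup [set (d (a t) (b t))%:E | t in sphere R n].

Definition rho (R : realType) (X : topologicalType) (d : X -> X -> R)
    (n : nat) (x : X) (a b : 'rV[R]_(n.+1) -> X) : \bar R :=
  ereal_inf [set e | exists a' b' : 'rV[R]_(n.+1) -> X,
     [/\ based_map R X n x a', based_homotopic R X n x a' a,
          based_map R X n x b', based_homotopic R X n x b' b &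
          e = mu R X d n a' b']].

Definition retr_target (R : realType) (n : nat) : set ('rV[R]_(n.+1) * R) :=
  (sphere R n `*` [set 0]) `|` ([set d0 R n] `*` unit_interval R).

Definition is_retraction (R : realType) (n : nat)
    (r : 'rV[R]_(n.+1) * R -> 'rV[R]_(n.+1) * R) : Prop :=
  [/\ {within sphere R n `*` unit_interval R, continuous r},
      (forall p, (sphere R n `*` unit_interval R) p -> retr_target R n (r p)) &
      (forall p, retr_target R n p -> r p = p)].

Definition path_conj (R : realType) (X : Type) (n : nat)
    (r : 'rV[R]_(n.+1) * R -> 'rV[R]_(n.+1) * R)
    (g : R -> X) (a : 'rV[R]_(n.+1) -> X) : 'rV[R]_(n.+1) -> X :=
  let h := fun p : 'rV[R]_(n.+1) * R =>
             if p.1 == d0 R n then g (1 - p.2) else a p.1 in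
  fun t => h (r (t, 1)).

(* Main.v *)
Require Import Defs.
From HB Require Import structures.
From mathcomp Require Import all_boot all_order all_algebra.
From mathcomp Require Import all_classical all_reals all_analysis.
From mathcomp Require Import lra ring.
Import Order.TTheory GRing.Theory Num.Theory.
Import numFieldNormedType.Exports.
Local Open Scope classical_set_scope.
Local Open Scope ring_scope.

Lemma wcomp {T U W : topologicalType} (A : set T) (B : set U) (f : T -> U) (g : U -> W) :
  {within A, continuous f} -> (forall x, A x -> B (f x)) ->
  {within B, continuous g} -> {within A, continuous (g \o f)}.
Proof.
move=> /subspace_continuousP cf AB /subspace_continuousP cg.
apply/subspace_continuousP => x Ax.
have Bfx := AB x Ax.
move=> V /(cg _ Bfx) /(cf _ Ax).
rewrite !nbhs_simpl /= => H; apply: (@filterS _ (nbhs x) _ _ _ _ H) => z /= H' Az.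
have := H' Az (AB _ Az); exact.
Qed.

Lemma wpair {T U W : topologicalType} (A : set T) (f : T -> U) (g : T -> W) :
  {within A, continuous f} -> {within A, continuous g} ->
  {within A, continuous (fun x => (f x, g x))}.
Proof.
move=> /subspace_continuousP cf /subspace_continuousP cg.
apply/subspace_continuousP => x Ax.
exact: cvg_pair (cf _ Ax) (cg _ Ax).
Qed.

Lemma wfst {T U : topologicalType} (A : set (T * U)) :
  {within A, continuous (@fst T U)}.
Proof. apply: continuous_subspaceT => x; exact: cvg_fst. Qed.

Lemma wsnd {T U : topologicalType} (A : set (T * U)) :
  {within A, continuous (@snd T U)}.
Proof. apply: continuous_subspaceT => x; exact: cvg_snd. Qed.

Lemma weq {T U : topologicalType} (A : set T) (f g : T -> U) :
  {within A, continuous f} -> (forall x, A x -> f x = g x) ->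
  {within A, continuous g}.
Proof.
move=> cf e; apply: (subspace_eq_continuous _ cf) => x; rewrite inE; exact: e.
Qed.

Lemma closedX {T U : topologicalType} (A : set T) (B : set U) :
  closed A -> closed B -> closed (A `*` B).
Proof.
move=> cA cB.
have -> : A `*` B = (fst @^-1` A) `&` (snd @^-1` B) by [].
apply: closedI.
  have cf : continuous (@fst T U) by move=> x; exact: cvg_fst.
  exact: (proj1 (continuous_closedP _) cf _ cA).
have cs : continuous (@snd T U) by move=> x; exact: cvg_snd.
exact: (proj1 (continuous_closedP _) cs _ cB).
Qed.

Lemma cont_sum (R : realType) (T : topologicalType) k (F : 'I_k -> T -> R) :
  (forall i, continuous (F i)) -> continuous (fun x => \sum_(i < k) F i x).
Proof.
elim: k F => [|k IH] F cF.
  have -> : (fun x => \sum_(i < 0) F i x) = fun _ => 0.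
    by apply: funext => x; rewrite big_ord0.
  exact: cst_continuous.
have -> : (fun x => \sum_(i < k.+1) F i x) =
   (fun x => \sum_(i < k) F (widen_ord (leqnSn k) i) x) + F ord_max.
  by apply: funext => x; rewrite big_ord_recr.
move=> x; apply: continuousD; last exact: cF.
by apply: IH => i; exact: cF.
Qed.

Lemma sphere_closed (R : realType) n : closed (sphere R n).
Proof.
have -> : sphere R n =
  (fun v : 'rV[R]_(n.+1) => \sum_(i < n.+1) (v ord0 i) ^+ 2) @^-1` [set x | x = 1] by [].
apply: (proj1 (continuous_closedP _)); last exact: closed_eq.
apply: cont_sum => i x.
exact: (@continuousM _ _ (fun v : 'rV[R]_(n.+1) => v ord0 i) (fun v : 'rV[R]_(n.+1) => v ord0 i) x
  (@coord_continuous R 1 n.+1 ord0 i x) (@coord_continuous R 1 n.+1 ord0 i x)).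
Qed.

Lemma d0_closed (R : realType) n : closed [set d0 R n].
Proof.
exact: (accessible_closed_set1 (hausdorff_accessible (@norm_hausdorff _ _)) (x:=d0 R n)).
Qed.

Lemma zero_closed (R : realType) : closed [set (0:R)].
Proof. exact: (closed_eq (y:=0)). Qed.

Lemma I_closed (R : realType) : closed (unit_interval R).
Proof. exact: (@interval_closed R (BLeft 0) (BRight 1) erefl erefl). Qed.

Lemma IP (R : realType) (s : R) : unit_interval R s <-> 0 <= s <= 1.
Proof. by rewrite /unit_interval /= in_itv. Qed.

Lemma d0_sphere (R : realType) n : sphere R n (d0 R n).
Proof.
rewrite /sphere /d0 /= big_ord_recl /= !mxE eqxx big1 ?addr0 ?expr1n //.
by move=> i _; rewrite !mxE /= expr0n.
Qed.

Definition glueH (R : realType) (X : Type) n (Q : R * R -> X)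
  (F : 'rV[R]_(n.+1) * R -> X) (q : ('rV[R]_(n.+1) * R) * R) : X :=
  if q.1.1 == d0 R n then Q (q.2, q.1.2) else F (q.1.1, q.2).
Arguments glueH {R X n}.

Lemma cont_fst_fst {T U W : topologicalType} :
  continuous (fun q : (T * U) * W => q.1.1).
Proof. by move=> q; apply: continuous_comp; exact: cvg_fst. Qed.

Lemma cont_snd_fst {T U W : topologicalType} :
  continuous (fun q : (T * U) * W => q.1.2).
Proof. by move=> q; apply: continuous_comp; [exact: cvg_fst| exact: cvg_snd]. Qed.

Lemma glue_cont (R : realType) (X : topologicalType) n (Q : R * R -> X)
  (F : 'rV[R]_(n.+1) * R -> X) :
  {within unit_interval R `*` unit_interval R, continuous Q} ->
  {within sphere R n `*` unit_interval R, continuous F} ->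
  (forall s, unit_interval R s -> F (d0 R n, s) = Q (s, 0)) ->
  {within retr_target R n `*` unit_interval R, continuous (glueH Q F)}.
Proof.
move=> cQ cF QF.
have -> : retr_target R n `*` unit_interval R =
  ((sphere R n `*` [set 0]) `*` unit_interval R) `|`
  (([set d0 R n] `*` unit_interval R) `*` unit_interval R).
  apply/seteqP; split => -[[v u] s] /=.
    by move=> [[[Sv u0]|[vd uI]] sI]; [left|right].
  by case=> [[[Sv u0] sI]|[[vd uI] sI]]; split => //; [left|right].
apply: withinU_continuous.
- by apply: closedX; [apply: closedX|]; [exact: sphere_closed|exact: zero_closed|exact: I_closed].
- by apply: closedX; [apply: closedX|]; [exact: d0_closed|exact: I_closed|exact: I_closed].
- apply: (@weq _ _ _ (F \o (fun q => (q.1.1, q.2)))).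
    apply: wcomp cF.
      apply: wpair; [exact: continuous_subspaceT cont_fst_fst|exact: wsnd].
    by move=> [[v u] s] /= [[Sv _] sI].
  move=> [[v u] s] /= [[Sv /= ->] sI]; rewrite /glueH /=.
  by case: eqP => [->|//]; rewrite QF.
- apply: (@weq _ _ _ (Q \o (fun q => (q.2, q.1.2)))).
    apply: wcomp cQ.
      apply: wpair; [exact: wsnd|exact: continuous_subspaceT cont_snd_fst].
    by move=> [[v u] s] /= [[_ uI] sI].
  by move=> [[v u] s] /= [[/= -> uI] sI]; rewrite /glueH /= eqxx.
Qed.

Lemma glue_comp (R : realType) (X : topologicalType) n (Q : R * R -> X)
  (F : 'rV[R]_(n.+1) * R -> X) (rh : 'rV[R]_(n.+1) * R -> 'rV[R]_(n.+1) * R) :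
  {within unit_interval R `*` unit_interval R, continuous Q} ->
  {within sphere R n `*` unit_interval R, continuous F} ->
  (forall s, unit_interval R s -> F (d0 R n, s) = Q (s, 0)) ->
  {within sphere R n `*` unit_interval R, continuous rh} ->
  (forall p, (sphere R n `*` unit_interval R) p -> retr_target R n (rh p)) ->
  {within sphere R n `*` unit_interval R, continuous (fun p => glueH Q F (rh p, p.2))}.
Proof.
move=> cQ cF QF crh rhm.
apply: (@wcomp _ _ _ _ (retr_target R n `*` unit_interval R) (fun p => (rh p, p.2)) (glueH Q F)).
- by apply: wpair => //; exact: wsnd.
- by move=> p Sp; split; [exact: rhm|case: Sp].
- exact: glue_cont.
Qed.

Lemma cont_lin (R : realType) (T : topologicalType) (a b : R) :
  continuous (fun x : T * R => a + b * x.2).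
Proof.
move=> x.
apply: (@continuousD _ _ _ (fun _ => a) (fun x : T * R => b * x.2) x).
  exact: cst_continuous.
apply: (@continuousM _ _ (fun _ => b) (fun x : T * R => x.2) x).
  exact: cst_continuous.
exact: cvg_snd.
Qed.

Lemma cont_linf (R : realType) (T : topologicalType) (a b : R) :
  continuous (fun x : R * T => a + b * x.1).
Proof.
move=> x.
apply: (@continuousD _ _ _ (fun _ => a) (fun x : R * T => b * x.1) x).
  exact: cst_continuous.
apply: (@continuousM _ _ (fun _ => b) (fun x : R * T => x.1) x).
  exact: cst_continuous.
exact: cvg_fst.
Qed.

Lemma cont_prod2 (R : realType) :
  continuous (fun x : R * R => (1 - x.1) * (1 - x.2)).
Proof.
have -> : (fun x : R * R => (1 - x.1) * (1 - x.2)) =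
   (fun x : R * R => (1 + (-1) * x.1) * (1 + (-1) * x.2)).
  by apply: funext => x; rewrite !mulN1r.
move=> x.
have h1 := @cont_linf R R 1 (-1) x.
have h2 := @cont_lin R R 1 (-1) x.
have := continuousM h1 h2.
exact.
Qed.

Lemma I0 (R : realType) : unit_interval R 0.
Proof. by apply/IP; rewrite lexx ler01. Qed.
Lemma I1 (R : realType) : unit_interval R 1.
Proof. by apply/IP; rewrite lexx ler01. Qed.

Lemma rt_split (R : realType) n q :
  retr_target R n q -> q.1 != d0 R n -> sphere R n q.1 /\ q.2 = 0.
Proof. by case=> [[Sv u0]|[vd _]] nd //; rewrite vd eqxx in nd. Qed.

Lemma conj_ext (R : realType) (X : Type) n r (p : R -> X) a b :
  is_retraction R n r -> (forall v, sphere R n v -> a v = b v) ->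
  forall t, sphere R n t -> path_conj R X n r p a t = path_conj R X n r p b t.
Proof.
move=> [_ rm _] ab t St; rewrite /path_conj /=.
have Hq : retr_target R n (r (t, 1)) by apply: rm; split => //; exact: I1.
case: eqP => // /eqP nd; have [Sq _] := rt_split _ _ _ Hq nd; exact: ab.
Qed.

Lemma conj_d0 (R : realType) (X : Type) n r (p : R -> X) a :
  is_retraction R n r -> path_conj R X n r p a (d0 R n) = p 0.
Proof.
move=> [_ _ rfix]; rewrite /path_conj /= rfix /=; first by rewrite eqxx subrr.
by right; split => //; exact: I1.
Qed.

Lemma rh1_cont (R : realType) n r :
  is_retraction R n r ->
  {within sphere R n `*` unit_interval R, continuous (fun q : 'rV[R]_(n.+1) * R => r (q.1, 1))}.
Proof.
move=> [cr rm _].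
apply: (@wcomp _ _ _ _ (sphere R n `*` unit_interval R) (fun q : 'rV[R]_(n.+1) * R => (q.1, 1)) r) => //.
- apply: wpair; first exact: wfst.
  apply: continuous_subspaceT => x; exact: cvg_cst.
- by move=> q [Sq _]; split => //; exact: I1.
Qed.

Lemma conj_cont (R : realType) (X : topologicalType) n r (p : R -> X)
  (K : 'rV[R]_(n.+1) * R -> X) :
  is_retraction R n r -> is_path R X p ->
  {within sphere R n `*` unit_interval R, continuous K} ->
  (forall s, unit_interval R s -> K (d0 R n, s) = p 1) ->
  {within sphere R n `*` unit_interval R,
     continuous (fun q => path_conj R X n r p (fun v => K (v, q.2)) q.1)}.
Proof.
move=> rr cp cK Kd.
have cQ : {within unit_interval R `*` unit_interval R, continuous (fun x : R * R => p (1 - x.2))}.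
  apply: (@wcomp _ _ _ _ (unit_interval R) (fun x : R * R => 1 - x.2) p) => //.
    apply: (@weq _ _ _ (fun x : R * R => 1 + (-1) * x.2)).
      apply: continuous_subspaceT; exact: (@cont_lin R R 1 (-1)).
    by move=> x _; rewrite mulN1r.
  by move=> [s u] [_ /IP /= uI]; apply/IP; lra.
have QF : forall s, unit_interval R s -> K (d0 R n, s) = (fun x : R * R => p (1 - x.2)) (s, 0).
  by move=> s sI; rewrite (Kd s sI) /= subr0.
have rm : forall q, (sphere R n `*` unit_interval R) q -> retr_target R n (r (q.1, 1)).
  by move=> q [Sq _]; case: rr => _ rm _; apply: rm; split => //; exact: I1.
have := @glue_comp R X n (fun x => p (1 - x.2)) K (fun q => r (q.1, 1)) cQ cK QF (rh1_cont _ _ _ rr) rm.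
by [].
Qed.

Lemma wresc (R : realType) (X : topologicalType) n (a b : R)
  (A : set ('rV[R]_(n.+1) * R)) (H : 'rV[R]_(n.+1) * R -> X) :
  {within sphere R n `*` unit_interval R, continuous H} ->
  (forall q, A q -> sphere R n q.1 /\ unit_interval R (a + b * q.2)) ->
  {within A, continuous (fun q => H (q.1, a + b * q.2))}.
Proof.
move=> cH Am.
apply: (@wcomp _ _ _ _ (sphere R n `*` unit_interval R) (fun q => (q.1, a + b * q.2)) H) => //.
apply: wpair; first exact: wfst.
by apply: continuous_subspaceT; exact: cont_lin.
Qed.

Lemma bh_sym (R : realType) (X : topologicalType) n x a b :
  based_homotopic R X n x a b -> based_homotopic R X n x b a.
Proof.
move=> [H [cH H0 H1 Hd]].
exists (fun q => H (q.1, 1 + (-1) * q.2)); split.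
- apply: wresc => // q [Sq /IP /= qI]; split => //; apply/IP; lra.
- by move=> t St /=; rewrite mulr0 addr0 H1.
- by move=> t St /=; rewrite mulN1r subrr H0.
- by move=> s /IP sI /=; rewrite Hd //; apply/IP; lra.
Qed.

Lemma bh_trans (R : realType) (X : topologicalType) n x a b c :
  based_homotopic R X n x a b -> based_homotopic R X n x b c ->
  based_homotopic R X n x a c.
Proof.
move=> [H [cH H0 H1 Hd]] [K [cK K0 K1 Kd]].
pose L := fun q : 'rV[R]_(n.+1) * R =>
  if q.2 <= 2^-1 then H (q.1, 0 + 2 * q.2) else K (q.1, -1 + 2 * q.2).
exists L; split.
- have -> : sphere R n `*` unit_interval R =
     (sphere R n `*` `[0, 2^-1]%classic) `|` (sphere R n `*` `[2^-1, 1]%classic).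
    apply/seteqP; split => -[t s] /=.
      move=> [St /IP sI]; case: (lerP s (2^-1)) => hs; [left|right];
        split => //=; rewrite in_itv /=; apply/andP; lra.
    by case=> -[St]; rewrite in_itv /= => /andP [h1 h2]; split => //; apply/IP; lra.
  apply: withinU_continuous.
  + apply: closedX; first exact: sphere_closed.
    exact: (@interval_closed R (BLeft 0) (BRight (2^-1)) erefl erefl).
  + apply: closedX; first exact: sphere_closed.
    exact: (@interval_closed R (BLeft (2^-1)) (BRight 1) erefl erefl).
  + apply: (@weq _ _ _ (fun q : 'rV[R]_(n.+1) * R => H (q.1, 0 + 2 * q.2))).
      apply: wresc => // -[t s] [St]; rewrite /= in_itv /= => /andP [h1 h2].
      by split => //; apply/IP; lra.
    by move=> [t s] [St]; rewrite /= in_itv /= => /andP [h1 h2]; rewrite /L /= h2.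
  + apply: (@weq _ _ _ (fun q : 'rV[R]_(n.+1) * R => K (q.1, -1 + 2 * q.2))).
      apply: wresc => // -[t s] [St]; rewrite /= in_itv /= => /andP [h1 h2].
      by split => //; apply/IP; lra.
    move=> [t s] [St]; rewrite /= in_itv /= => /andP [h1 h2]; rewrite /L /=.
    case: ifP => // h3; have -> : s = 2^-1 by lra.
    have -> : 0 + 2 * 2^-1 = 1 :> R by rewrite add0r divff.
    have -> : -1 + 2 * 2^-1 = 0 :> R by rewrite divff // addNr.
    by rewrite H1 // K0.
- move=> t St; rewrite /L /= ifT; last by rewrite invr_ge0 ler0n.
  by rewrite mulr0 addr0 H0.
- move=> t St; rewrite /L /= ifF; last by apply/negbTE; rewrite -ltNge; lra.
  have -> : (-1 + 2 * 1 : R) = 1 by lra.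
  exact: K1.
- move=> s /IP sI; rewrite /L /=; case: ifP => h.
    by rewrite Hd //; apply/IP; lra.
  by rewrite Kd //; apply/IP; move/negbT: h; rewrite -ltNge => h; lra.
Qed.

Lemma conj_based (R : realType) (X : topologicalType) n r (p : R -> X) a :
  is_retraction R n r -> is_path R X p ->
  based_map R X n (p 1) a -> based_map R X n (p 0) (path_conj R X n r p a).
Proof.
move=> rr cp [ca ad]; split; last exact: (conj_d0 _ _ _ _ _ _ rr).
have cK : {within sphere R n `*` unit_interval R, continuous (fun q : 'rV[R]_(n.+1) * R => a q.1)}.
  apply: (@wcomp _ _ _ _ (sphere R n) fst a) => //; first exact: wfst.
  by move=> q [].
have := @conj_cont _ _ _ _ _ _ rr cp cK (fun s _ => ad).
move=> H.
apply: (@wcomp _ _ _ _ (sphere R n `*` unit_interval R) (fun t => (t, 0)) _ _ _ H).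
  apply: wpair; first by apply: continuous_subspaceT; move=> t; exact: cvg_id.
  by apply: continuous_subspaceT; exact: cst_continuous.
by move=> t St; split => //; exact: I0.
Qed.

Lemma conj_homotopic (R : realType) (X : topologicalType) n r (p : R -> X) a b :
  is_retraction R n r -> is_path R X p ->
  based_homotopic R X n (p 1) a b ->
  based_homotopic R X n (p 0) (path_conj R X n r p a) (path_conj R X n r p b).
Proof.
move=> rr cp [H [cH H0 H1 Hd]].
exists (fun q => path_conj R X n r p (fun v => H (v, q.2)) q.1); split.
- exact: conj_cont.
- by move=> t St /=; apply: conj_ext => // v Sv; rewrite H0.
- by move=> t St /=; apply: conj_ext => // v Sv; rewrite H1.
- by move=> s sI /=; rewrite conj_d0.
Qed.

Lemma transport (R : realType) (X : topologicalType) n r (p : R -> X)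
  (F : 'rV[R]_(n.+1) * R -> X) al be :
  is_retraction R n r -> is_path R X p ->
  {within sphere R n `*` unit_interval R, continuous F} ->
  (forall s, unit_interval R s -> F (d0 R n, s) = p (1 - s)) ->
  (forall t, sphere R n t -> F (t, 0) = al t) ->
  (forall t, sphere R n t -> F (t, 1) = be t) ->
  based_homotopic R X n (p 0) (path_conj R X n r p al) be.
Proof.
move=> rr cp cF Fd F0 F1.
have [cr rm rfix] := rr.
pose Q2 := fun x : R * R => p ((1 - x.1) * (1 - x.2)).
pose Q3 := fun x : R * R => p 0.
pose F1' := fun q : 'rV[R]_(n.+1) * R => F (q.1, 1).
pose M := fun q : 'rV[R]_(n.+1) * R => glueH Q2 F (r (q.1, 1), q.2).
pose N := fun q : 'rV[R]_(n.+1) * R => glueH Q3 F1' (r q, q.2).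
have cQ2 : {within unit_interval R `*` unit_interval R, continuous Q2}.
  apply: (@wcomp _ _ _ _ (unit_interval R) (fun x : R * R => (1 - x.1) * (1 - x.2)) p) => //.
    by apply: continuous_subspaceT; exact: cont_prod2.
  move=> [s u] [/IP /= sI /IP /= uI]; apply/IP.
  by apply/andP; split; [apply: mulr_ge0|apply: mulr_ile1]; lra.
have cM : {within sphere R n `*` unit_interval R, continuous M}.
  apply: glue_comp => //.
  - by move=> s sI; rewrite Fd // /Q2 /= subr0 mulr1.
  - exact: rh1_cont.
  - by move=> q [Sq _]; apply: rm; split => //; exact: I1.
have cN : {within sphere R n `*` unit_interval R, continuous N}.
  apply: glue_comp => //.
  - by apply: continuous_subspaceT; exact: cst_continuous.
  - apply: (@wcomp _ _ _ _ (sphere R n `*` unit_interval R) (fun q : 'rV[R]_(n.+1) * R => (q.1, 1)) F) => //.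
      apply: wpair; first exact: wfst.
      by apply: continuous_subspaceT; exact: cst_continuous.
    by move=> q [Sq _]; split => //; exact: I1.
  - by move=> s sI; rewrite /F1' /Q3 /= Fd ?subrr //; exact: I1.
have r1 : forall t, sphere R n t -> retr_target R n (r (t, 1)).
  by move=> t St; apply: rm; split => //; exact: I1.
have rd : forall s, unit_interval R s -> r (d0 R n, s) = (d0 R n, s).
  by move=> s sI; apply: rfix; right.
apply: (@bh_trans _ _ _ _ _ (fun t => M (t, 1))).
  exists M; split => //.
  - move=> t St; rewrite /M /glueH /path_conj /=.
    case: eqP => [_|/eqP nd]; first by rewrite /Q2 /= subr0 mul1r.
    by have [Sv _] := rt_split _ _ _ (r1 t St) nd; rewrite F0.
  - by move=> s sI; rewrite /M /glueH /= rd ?eqxx /Q2 /= ?subrr ?mulr0 //; exact: I1.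
apply: bh_sym; exists N; split => //.
- move=> t St; rewrite /N /glueH /= rfix /=; last by left.
  case: eqP => [->|_]; last by rewrite /F1' /= F1.
  by rewrite /Q3 -F1 ?Fd ?subrr //; [exact: I1|exact: d0_sphere].
- move=> t St; rewrite /N /M /glueH /=.
  case: eqP => _ //; by rewrite /Q2 /Q3 /= subrr mul0r.
- by move=> s sI; rewrite /N /glueH /= rd ?eqxx.
Qed.

Lemma mu_conj (R : realType) (X : Type) (d : X -> X -> R) n r (p : R -> X) a b :
  is_retraction R n r -> (forall x y, 0 <= d x y) -> (forall x, d x x = 0) ->
  (mu R X d n (path_conj R X n r p a) (path_conj R X n r p b) <= mu R X d n a b)%E.
Proof.
move=> [_ rm _] dge dxx.
rewrite /mu; apply: ge_ereal_sup => _ [t St <-].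
have Hq : retr_target R n (r (t, 1)) by apply: rm; split => //; exact: I1.
rewrite /path_conj /=.
case: eqP => [_|/eqP nd].
  rewrite dxx; apply: (@le_trans _ _ (d (a (d0 R n)) (b (d0 R n)))%:E).
    by rewrite lee_fin.
  by apply: ereal_sup_ubound; exists (d0 R n) => //; exact: d0_sphere.
have [Sv _] := rt_split _ _ _ Hq nd.
by apply: ereal_sup_ubound; exists (r (t, 1)).1.
Qed.

Theorem proposition4p11 (R : realType) (X : pseudoMetricType R)
    (d : X -> X -> R) (n : nat)
    (r : 'rV[R]_(n.+1) * R -> 'rV[R]_(n.+1) * R) (g : R -> X)
    (b1 b2 : 'rV[R]_(n.+1) -> X) :
  is_metric R X d -> path_connected_sp R X -> (1 <= n)%N ->
  is_retraction R n r -> is_path R X g ->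
  based_map R X n (g 1) b1 -> based_map R X n (g 1) b2 ->
  rho R X d n (g 0) (path_conj R X n r g b1) (path_conj R X n r g b2)
  = rho R X d n (g 1) b1 b2.
Proof.
move=> [dge deq dsym dtri dball] _ _ rr cp bm1 bm2.
have dxx : forall x, d x x = 0 by move=> x; apply/deq.
have [cr rm rfix] := rr.
pose gb := fun u : R => g (1 - u).
have cgb : is_path R X gb.
  apply: (@wcomp _ _ _ _ (unit_interval R) (fun u : R => 1 - u) g) => //.
    apply: continuous_subspaceT => u.
    apply: cvgB; [exact: cvg_cst|exact: cvg_id].
  by move=> u /IP uI; apply/IP; lra.
have gb0 : gb 0 = g 1 by rewrite /gb subr0.
have gb1 : gb 1 = g 0 by rewrite /gb subrr.
apply/eqP; rewrite eq_le; apply/andP; split.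
  apply: le_ereal_inf_tmp => _ [b1' [b2' [m1 h1 m2 h2 ->]]].
  apply: le_trans (mu_conj _ _ _ _ _ g _ _ rr dge dxx).
  apply: ereal_inf_lbound.
  exists (path_conj R X n r g b1'), (path_conj R X n r g b2'); split => //.
  - exact: conj_based.
  - exact: conj_homotopic.
  - exact: conj_based.
  - exact: conj_homotopic.
apply: le_ereal_inf_tmp => _ [c1 [c2 [m1 h1 m2 h2 ->]]].
apply: le_trans (mu_conj _ _ _ _ _ gb _ _ rr dge dxx).
apply: ereal_inf_lbound.
have back : forall b, based_map R X n (g 1) b ->
    based_homotopic R X n (gb 0) (path_conj R X n r gb (path_conj R X n r g b)) b.
  move=> b [cb bd].
  pose Qg := fun x : R * R => g (1 - x.2).
  pose Fb := fun q : 'rV[R]_(n.+1) * R => b q.1.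
  pose F := fun q : 'rV[R]_(n.+1) * R => glueH Qg Fb (r (q.1, 1 + (-1) * q.2), q.2).
  have rd : forall s, unit_interval R s -> r (d0 R n, s) = (d0 R n, s).
    by move=> s sI; apply: rfix; right.
  apply: (@transport _ _ _ _ _ F) => //.
  - apply: glue_comp => //.
    + apply: (@wcomp _ _ _ _ (unit_interval R) (fun x : R * R => 1 - x.2) g) => //.
        apply: (@weq _ _ _ (fun x : R * R => 1 + (-1) * x.2)).
          apply: continuous_subspaceT; exact: (@cont_lin R R 1 (-1)).
        by move=> x _; rewrite mulN1r.
      by move=> [s u] [_ /IP /= uI]; apply/IP; lra.
    + apply: (@wcomp _ _ _ _ (sphere R n) fst b) => //; first exact: wfst.
      by move=> q [].
    + by move=> s sI; rewrite /Fb /Qg /= bd subr0.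
    + apply: wresc => // q [Sq /IP qI]; split => //; apply/IP => /=; lra.
    + by move=> q [Sq /IP qI]; apply: rm; split => //; apply/IP => /=; lra.
  - move=> s /IP sI; rewrite /F /glueH /= rd ?eqxx /Qg /gb /=; last by apply/IP; lra.
    by rewrite mulN1r.
  - move=> t St; rewrite /F /= mulr0 addr0 /glueH /path_conj /=; done.
  - move=> t St; rewrite /F /= mulr1 addrN /glueH /= rfix /=; last by left; split => //.
    by case: eqP => [->|//]; rewrite /Qg /= subr0 bd.
exists (path_conj R X n r gb c1), (path_conj R X n r gb c2); split => //.
- by rewrite -gb0; apply: conj_based => //; rewrite gb1.
- rewrite -gb0; apply: (@bh_trans _ _ _ _ _ (path_conj R X n r gb (path_conj R X n r g b1))).
    by apply: conj_homotopic => //; rewrite gb1.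
  exact: back.
- by rewrite -gb0; apply: conj_based => //; rewrite gb1.
- rewrite -gb0; apply: (@bh_trans _ _ _ _ _ (path_conj R X n r gb (path_conj R X n r g b2))).
    by apply: conj_homotopic => //; rewrite gb1.
  exact: back.
Qed.
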